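(* Let $(S,\le)$ be a well-quasi-order and $k\in\mathbb{N}$. The set of all finite $k$-path bounded $S$-graphs, ordered by the induced subgraph ordering $\sqsubseteq$, is a well-quasi-order.
   Context: An $S$-graph is a finite undirected graph $(V,E,L)$ with labelling $L:V\to S$. For $S$-graphs $\theta_1=(V_1,E_1,L_1)$, $\theta_2=(V_2,E_2,L_2)$, $\theta_1\sqsubseteq\theta_2$ iff there is an injection $h:V_1\to V_2$ such that for all $u,v\in V_1$: $(u,v)\in E_1\iff(h(u),h(v))\in E_2$, and $L_1(u)\le L_2(h(u))$. A graph is $k$-path bounded if its longest simple path has length at most $k$. *)

(* Defs.v *)
From mathcomp Require Import all_boot.
Set Implicit Arguments. Unset Strict Implicit. Unset Printing Implicit Defensive.

Definition wqo_on (T : Type) (P : T -> Prop) (R : T -> T -> Prop) : Prop :=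
  (forall x, P x -> R x x) /\
  (forall x y z, P x -> P y -> P z -> R x y -> R y z -> R x z) /\
  (forall f : nat -> T, (forall i, P (f i)) ->
     exists i j, (i < j)%N /\ R (f i) (f j)).

Definition wqo (T : Type) (R : T -> T -> Prop) : Prop :=
  wqo_on (fun _ : T => True) R.

Record sgraph (S : Type) := SGraph {
  nv : nat;
  adj : rel 'I_nv;
  lab : 'I_nv -> S }.

Definition undirected (S : Type) (g : sgraph S) : Prop :=
  symmetric (@adj S g) /\ irreflexive (@adj S g).

Definition sg_le (S : Type) (le : S -> S -> Prop) (g1 g2 : sgraph S) : Prop :=
  exists h : 'I_(nv g1) -> 'I_(nv g2),
    injective h /\
    (forall u v, @adj S g1 u v = @adj S g2 (h u) (h v)) /\
    (forall u, le (@lab S g1 u) (@lab S g2 (h u))).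

(* every simple path x :: p (distinct vertices, consecutive adjacent)
   has length (number of edges) size p at most k *)
Definition path_bounded (S : Type) (k : nat) (g : sgraph S) : Prop :=
  forall (x : 'I_(nv g)) (p : seq 'I_(nv g)),
    path (@adj S g) x p -> uniq (x :: p) -> (size p <= k)%N.

Definition kpb_sgraph (S : Type) (k : nat) (g : sgraph S) : Prop :=
  undirected g /\ path_bounded k g.

(* Main.v *)
Require Import Defs.
From Stdlib Require Import ClassicalEpsilon Classical.
From mathcomp Require Import all_boot.
Set Implicit Arguments. Unset Strict Implicit. Unset Printing Implicit Defensive.

Fixpoint allp (A : Type) (P : A -> Prop) (s : seq A) : Prop :=
  match s with [::] => True | x :: s' => P x /\ allp P s' end.

Section Emb.
Variables (A B : Type) (R : A -> B -> Prop).
Fixpoint emb (xs : seq A) (ys : seq B) {struct ys} : Prop :=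
  match xs, ys with
  | [::], _ => True
  | _ :: _, [::] => False
  | x :: xs', y :: ys' => (R x y /\ emb xs' ys') \/ emb xs ys'
  end.
Lemma emb_nil ys : emb [::] ys.
Proof. by case: ys. Qed.
Lemma emb_skip xs y ys : emb xs ys -> emb xs (y :: ys).
Proof. by case: xs => //= x xs H; right. Qed.
End Emb.

Lemma emb_map (A B C D : Type) (R : C -> D -> Prop) (f : A -> C) (g : B -> D) xs ys :
  emb R (map f xs) (map g ys) -> emb (fun x y => R (f x) (g y)) xs ys.
Proof.
elim: ys xs => [|y ys IH] [|x xs] //= [[H1 H2]|H]; first by left; split => //; exact: IH.
by right; apply: (IH (x :: xs)).
Qed.

Lemma emb_refl (A : Type) (P : A -> Prop) (R : A -> A -> Prop) xs :
  (forall x, P x -> R x x) -> allp P xs -> emb R xs xs.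
Proof. move=> HR; elim: xs => //= x xs IH [Px Pxs]; left; split; auto. Qed.

Lemma emb_trans (A : Type) (P : A -> Prop) (R : A -> A -> Prop) :
  (forall x y z, P x -> P y -> P z -> R x y -> R y z -> R x z) ->
  forall xs ys zs, allp P xs -> allp P ys -> allp P zs ->
  emb R xs ys -> emb R ys zs -> emb R xs zs.
Proof.
move=> HT xs ys zs; elim: zs xs ys => [|z zs IH] [|x xs] [|y ys] //=.
move=> [Px Pxs] [Py Pys] [Pz Pzs] Hxy [[Ryz Eyz]|Eyz].
  case: Hxy => [[Rxy Exy]|Exy].
    left; split; first exact: (HT x y z).
    exact: (IH xs ys).
  right; apply: (IH (x :: xs) ys) => //=.
right; apply: (IH (x :: xs) (y :: ys)) => //=.
Qed.

Lemma ex_min (Q : nat -> Prop) : (exists n, Q n) -> exists n, Q n /\ forall m, Q m -> n <= m.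
Proof.
move=> [n Qn]; elim: n {-2}n (leqnn n) Qn => [|N IH] n Hn Qn.
  exists n; split => // m _; move: Hn; rewrite leqn0 => /eqP ->; done.
case: (classic (exists m, Q m /\ m < n)) => [[m [Qm ltm]]|H].
  apply: (IH m) => //; rewrite -ltnS; exact: leq_trans ltm Hn.
exists n; split => // m Qm; rewrite leqNgt; apply/negP => lt; apply: H; by exists m.
Qed.

Lemma ltn_mono (phi : nat -> nat) : (forall i, phi i < phi i.+1) ->
  forall i j, i < j -> phi i < phi j.
Proof.
move=> H i j; elim: j => // j IH; rewrite ltnS leq_eqVlt => /orP [/eqP ->|lt] //.
exact: ltn_trans (IH lt) (H j).
Qed.

Section Chain.
Variables (A : Type) (P : A -> Prop) (R : A -> A -> Prop).
Hypothesis HW : wqo_on P R.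

Lemma chain (f : nat -> A) : (forall i, P (f i)) ->
  exists phi : nat -> nat, (forall i, phi i < phi i.+1) /\
     forall i j, i < j -> R (f (phi i)) (f (phi j)).
Proof.
move=> Pf; case: HW => _ [HT HB].
have [N HN] : exists N, forall i, N <= i -> exists j, i < j /\ R (f i) (f j).
  apply: NNPP => H.
  have Hs : forall N, exists i, N <= i /\ forall j, i < j -> ~ R (f i) (f j).
    move=> N; apply: NNPP => H2; apply: H; exists N => i Ni.
    apply: NNPP => H3; apply: H2; exists i; split => // j ij Rij.
    by apply: H3; exists j.
  pose s N := epsilon (inhabits 0) (fun i => N <= i /\ forall j, i < j -> ~ R (f i) (f j)).
  have sP N : N <= s N /\ forall j, s N < j -> ~ R (f (s N)) (f j).
    exact: (epsilon_spec (inhabits 0) _ (Hs N)).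
  pose psi := fix psi n := if n is n'.+1 then s (psi n').+1 else s 0.
  have psiI : forall i, psi i < psi i.+1 by move=> i /=; case: (sP (psi i).+1).
  have [i [j [ij Rij]]] := HB (fun n => f (psi n)) (fun n => Pf _).
  have := (sP (if i is i'.+1 then (psi i').+1 else 0)).2 (psi j).
  have -> : s (if i is i'.+1 then (psi i').+1 else 0) = psi i by case: i {ij Rij}.
  by move=> /(_ (ltn_mono psiI ij)).
pose nx i := epsilon (inhabits 0) (fun j => N <= i -> i < j /\ R (f i) (f j)).
have nxP i : N <= i -> i < nx i /\ R (f i) (f (nx i)).
  apply: (epsilon_spec (inhabits 0) (fun j => N <= i -> i < j /\ R (f i) (f j))).
  case: (leqP N i) => Ni; last by exists 0.
  by have [j Hj] := HN i Ni; exists j.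
pose phi := fix phi n := if n is n'.+1 then nx (phi n') else N.
have phiN : forall n, N <= phi n.
  elim => //= n IH; apply: leq_trans IH (ltnW (nxP _ IH).1).
exists phi; split; first by move=> i; exact: (nxP _ (phiN i)).1.
move=> i j; elim: j => // j IH; rewrite ltnS leq_eqVlt => /orP [/eqP ->|lt].
  exact: (nxP _ (phiN j)).2.
apply: (HT _ (f (phi j))) => //; first exact: IH.
exact: (nxP _ (phiN j)).2.
Qed.
End Chain.


Section Higman.
Variables (A : Type) (P : A -> Prop) (R : A -> A -> Prop).
Hypothesis HW : wqo_on P R.

Definition bad (f : nat -> seq A) :=
  (forall i, allp P (f i)) /\ forall i j, i < j -> ~ emb R (f i) (f j).

Definition ext (p : seq (seq A)) :=
  exists f, bad f /\ forall i, i < size p -> f i = nth [::] p i.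

Definition mincond (p : seq (seq A)) (x : seq A) :=
  (exists f, bad f /\ (forall i, i < size p -> f i = nth [::] p i) /\ f (size p) = x) /\
  (forall f, bad f -> (forall i, i < size p -> f i = nth [::] p i) -> size x <= size (f (size p))).

Lemma mincond_ex p : ext p -> exists x, mincond p x.
Proof.
move=> [f0 [B0 E0]].
have [n [[f [Bf [Ef Sf]]] Hmin]] := @ex_min
  (fun n => exists f, bad f /\ (forall i, i < size p -> f i = nth [::] p i) /\ size (f (size p)) = n)
  (ex_intro _ _ (ex_intro _ f0 (conj B0 (conj E0 erefl)))).
exists (f (size p)); split; first by exists f.
move=> g Bg Eg; rewrite Sf; apply: Hmin; by exists g.
Qed.

Definition nextv p := epsilon (inhabits [::]) (mincond p).

Fixpoint pref n := if n is n'.+1 then rcons (pref n') (nextv (pref n')) else [::].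

Lemma size_pref n : size (pref n) = n.
Proof. by elim: n => //= n IH; rewrite size_rcons IH. Qed.

Lemma ext_pref n : ext (pref n) -> mincond (pref n) (nextv (pref n)).
Proof. move=> H; exact: epsilon_spec (mincond_ex H). Qed.

Lemma no_bad : ~ exists f, bad f.
Proof.
move=> [f0 B0].
have Epref : forall n, ext (pref n).
  elim => [|n IH]; first by exists f0; split.
  have [[f [Bf [Ef Fn]]] _] := ext_pref IH.
  exists f; split => // i; rewrite /= size_rcons nth_rcons size_pref ltnS leq_eqVlt.
  case/orP => [/eqP ->|lt]; first by rewrite ltnn eqxx -Fn size_pref.
  by rewrite lt; apply: Ef; rewrite size_pref.
pose g i := nextv (pref i).
have gpref : forall n i, i < n -> nth [::] (pref n) i = g i.
  elim => // n IH i; rewrite /= nth_rcons size_pref ltnS leq_eqVlt.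
  case/orP => [/eqP ->|lt]; first by rewrite ltnn eqxx.
  by rewrite lt IH.
have Hg : forall n, exists f, bad f /\ forall i, i <= n -> f i = g i.
  move=> n; have [f [Bf Ef]] := Epref n.+1; exists f; split => // i le.
  by rewrite Ef ?size_pref // gpref.
have Bg : bad g.
  split.
    move=> i; have [f [[Pf _] Ef]] := Hg i; rewrite -Ef //; exact: Pf.
  move=> i j ij; have [f [[_ Bf] Ef]] := Hg j.
  by rewrite -!Ef //; [apply: Bf | apply: ltnW].
have Mg : forall n f, bad f -> (forall i, i < n -> f i = g i) -> size (g n) <= size (f n).
  move=> n f Bf Ef; have [_ M] := ext_pref (Epref n).
  move: (M f Bf); rewrite size_pref; apply => i lt.
  by rewrite gpref // Ef.
have gne : forall n, g n <> [::].
  move=> n E; have := Bg; case => _ B; apply: (B n n.+1 (ltnSn n)); rewrite E; exact: emb_nil.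
case E0 : (g 0) => [|a0 s0]; first by have := gne 0; rewrite E0.
pose x n := head a0 (g n); pose t n := behead (g n).
have gE : forall n, g n = x n :: t n by move=> n; rewrite /x /t; case: (g n) (gne n).
have Px : forall n, P (x n) by move=> n; have := Bg.1 n; rewrite gE => -[].
have Pt : forall n, allp P (t n) by move=> n; have := Bg.1 n; rewrite gE => -[].
have [phi [phiI phiR]] := chain HW Px.
pose f' n := if n < phi 0 then g n else t (phi (n - phi 0)).
have phimono := ltn_mono phiI.
have phile : forall m, phi 0 <= phi m.
  by case => // m; apply: ltnW; apply: phimono.
have Bf' : bad f'.
  split => [i|i j ij]; first by rewrite /f'; case: ifP => _ //; exact: Bg.1.
  rewrite /f'; case: ifP => Hi; case: ifP => Hj.
  - exact: Bg.2.
  - move=> H; apply: (Bg.2 i (phi (j - phi 0))); first exact: leq_trans Hi (phile _).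
    by rewrite [g (phi _)]gE; apply: emb_skip.
  - move: Hi => /negbT; rewrite -leqNgt => Hi.
    by move: (leq_ltn_trans Hi (ltn_trans ij Hj)); rewrite ltnn.
  - move=> H; have lt : i - phi 0 < j - phi 0.
      by rewrite ltn_sub2rE // leqNgt Hi.
    apply: (Bg.2 _ _ (phimono _ _ lt)); rewrite !gE /=; left; split => //.
    exact: phiR.
have Hf' : forall i, i < phi 0 -> f' i = g i by move=> i lt; rewrite /f' lt.
have := Mg (phi 0) f' Bf' Hf'.
rewrite /f' ltnn subnn gE /=; by rewrite ltnn.
Qed.

Lemma higman : wqo_on (allp P) (emb R).
Proof.
case: HW => Hr [Ht _]; split; first by move=> x Px; exact: emb_refl Hr Px.
split; first by move=> x y z Px Py Pz; apply: (emb_trans Ht).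
move=> f Pf; apply: NNPP => H; apply: no_bad; exists f; split => // i j ij E.
by apply: H; exists i, j.
Qed.
End Higman.


Inductive tree (A : Type) := Node of A & seq (tree A).

Section Trees.
Variables (A : Type) (P : A -> Prop) (R : A -> A -> Prop).

Fixpoint tin (d : nat) (t : tree A) : Prop :=
  match d with 0 => False | d'.+1 => let: Node a ts := t in P a /\ allp (tin d') ts end.

Fixpoint temb (d : nat) (t u : tree A) : Prop :=
  match d with 0 => False | d'.+1 =>
    let: Node a ts := t in let: Node b us := u in R a b /\ emb (temb d') ts us end.

Lemma tree_wqo d : wqo_on P R -> wqo_on (tin d) (temb d).
Proof.
move=> HW; elim: d => [|d IH].
  split => //; split => // f Pf; by case: (Pf 0).
have HH := higman IH; case: HH => Hr [Ht Hb].
have [Rr [Rt _]] := HW.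
split.
  by case=> a ts [Pa Pts] /=; split; [apply: Rr | apply: Hr].
split.
  case=> a ts [b us] [c vs] /= [Pa Pts] [Pb Pus] [Pc Pvs] [Rab Eab] [Rbc Ebc].
  split; [exact: (Rt a b c) | exact: (Ht ts us vs)].
move=> f Pf.
pose lb n := let: Node a _ := f n in a.
pose ch n := let: Node _ ts := f n in ts.
have fE : forall n, f n = Node (lb n) (ch n) by move=> n; rewrite /lb /ch; case: (f n).
have Plb : forall n, P (lb n) by move=> n; have := Pf n; rewrite fE => -[].
have Pch : forall n, allp (tin d) (ch n) by move=> n; have := Pf n; rewrite fE => -[].
have [phi [phiI phiR]] := chain HW Plb.
have [i [j [ij E]]] := Hb (fun n => ch (phi n)) (fun n => Pch _).
exists (phi i), (phi j); split; first exact: (ltn_mono phiI ij).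
rewrite !fE /=; split => //; exact: phiR.
Qed.
End Trees.

Lemma pigeon (T : finType) (f : nat -> T) : exists i j, i < j /\ f i = f j.
Proof.
pose g (i : 'I_(#|T|.+1)) := f i.
case: (boolP (injectiveb g)) => [/injectiveP inj|/injectivePn [x [y xy E]]].
  by have := leq_card _ inj; rewrite card_ord ltnn.
case: (ltngtP x y) => [lt|lt|eq].
- by exists x, y.
- by exists y, x.
- by move: xy; rewrite (val_inj eq) eqxx.
Qed.

Lemma prod_wqo (S : Type) (le : S -> S -> Prop) (T : finType) :
  wqo le -> wqo (fun a b : S * T => le a.1 b.1 /\ a.2 = b.2).
Proof.
move=> [Hr [Ht Hb]]; split; first by move=> x _; split => //; exact: Hr.
split.
  move=> x y z _ _ _ [l1 e1] [l2 e2]; split; last by rewrite e1.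
  exact: (Ht x.1 y.1 z.1).
move=> f _.
have [phi [phiI phiR]] := chain (conj Hr (conj Ht Hb)) (f := fun n => (f n).1) (fun _ => I).
have [i [j [ij E]]] := pigeon (fun n => (f (phi n)).2).
exists (phi i), (phi j); split; first exact: (ltn_mono phiI ij).
split => //; exact: phiR.
Qed.


Fixpoint verts (T : Type) (t : tree T) : seq T :=
  let: Node v ts := t in v :: flatten (map (@verts T) ts).
Definition fverts (T : Type) (ts : seq (tree T)) := flatten (map (@verts T) ts).

Section Dec.
Variables (S : Type) (g : sgraph S).
Local Notation V := 'I_(nv g).
Local Notation adj := (@adj S g).
Hypothesis Hsym : symmetric adj.

Fixpoint nocross (ts : seq (tree V)) : Prop :=
  match ts with [::] => True
  | t :: ts' => (forall x y, x \in verts t -> y \in fverts ts' -> ~~ adj x y) /\ nocross ts' end.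

Fixpoint dec (d : nat) (t : tree V) : Prop :=
  match d with 0 => False | d'.+1 =>
    let: Node v ts := t in allp (dec d') ts /\ uniq (v :: fverts ts) /\ nocross ts end.

Definition eU (U : {set V}) : rel V := fun x y => adj x y && (x \in U) && (y \in U).

Lemma eU_sym U : symmetric (eU U).
Proof. by move=> x y; rewrite /eU Hsym; case: (x \in U); case: (y \in U); rewrite ?andbT ?andbF. Qed.

Lemma dec_uniq d t : dec d t -> uniq (verts t).
Proof. by case: d => // d; case: t => v ts /= [_ [u _]]. Qed.

Lemma path_in U x p : path (eU U) x p -> forall z, z \in p -> z \in U.
Proof.
elim: p x => //= y p IH x /andP [/andP [/andP [_ _] yU] pth] z.
by rewrite inE => /orP [/eqP ->|/(IH _ pth)].
Qed.

Lemma path_restr (U X : {set V}) x p : path (eU U) x p -> (forall z, z \in x :: p -> z \in X) ->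
  path (eU X) x p.
Proof.
elim: p x => //= y p IH x /andP [/andP [/andP [a _] _] pth] H.
have Hx : x \in X by apply: H; rewrite inE eqxx.
have Hy : y \in X by apply: H; rewrite !inE eqxx orbT.
rewrite /eU a Hx Hy /=; apply: IH => // z zp; apply: H; by rewrite inE zp orbT.
Qed.

Lemma eU_sub (U X : {set V}) : U \subset X -> subrel (eU U) (eU X).
Proof. by move=> /subsetP sUX x y /andP [/andP [a xU] yU]; rewrite /eU a !sUX. Qed.

Definition DEC d := forall (U : {set V}) r, r \in U ->
  (forall y, y \in U -> connect (eU U) r y) ->
  (forall p, path (eU U) r p -> uniq (r :: p) -> size p < d) ->
  exists t, dec d t /\ verts t =i U.

Lemma forest d : DEC d -> forall (U' : {set V}) (good : V -> Prop),
  (forall c, c \in U' -> good c -> forall p, path (eU U') c p -> uniq (c :: p) -> size p < d) ->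
  forall W : {set V}, W \subset U' -> closed (eU U') W ->
  (forall w, w \in W -> exists c, [/\ c \in U', good c & connect (eU U') c w]) ->
  exists ts, allp (dec d) ts /\ fverts ts =i W /\ uniq (fverts ts) /\ nocross ts.
Proof.
move=> HD U' good Hgood.
suff main : forall n (W : {set V}), #|W| <= n -> W \subset U' -> closed (eU U') W ->
  (forall w, w \in W -> exists c, [/\ c \in U', good c & connect (eU U') c w]) ->
  exists ts, allp (dec d) ts /\ fverts ts =i W /\ uniq (fverts ts) /\ nocross ts.
  by move=> W; apply: main.
elim => [|n IH] W cW sW clW roots.
  exists [::]; split => //; split => //.
  by move: cW; rewrite leqn0 cards_eq0 => /eqP -> x; rewrite inE.
case: (set_0Vmem W) => [->|[w wW]].
  by exists [::]; split => //; split => // x; rewrite inE.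
have [c [cU gc cw]] := roots w wW.
set e' := eU U'.
pose C := [set y | connect e' c y].
have cC : c \in C by rewrite inE connect0.
have cW' : c \in W by rewrite (closed_connect clW cw).
have CW : C \subset W.
  by apply/subsetP => y; rewrite inE => cy; rewrite -(closed_connect clW cy).
have CU : C \subset U' by exact: subset_trans CW sW.
have clC : closed e' C.
  move=> x y exy; rewrite !inE; apply/idP/idP => H.
    exact: connect_trans H (connect1 exy).
  by apply: (connect_trans H); apply: connect1; rewrite /e' eU_sym.
have [t [dt vt]] : exists t, dec d t /\ verts t =i C.
  apply: (HD C c cC).
    move=> y; rewrite inE => /connectP [p pth ->].
    apply/connectP; exists p => //; apply: (path_restr pth) => z zp.
    by rewrite inE; apply: path_connect pth _ zp.
  move=> p pth up; apply: (Hgood c) => //.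
  exact: sub_path (eU_sub CU) _ _ pth.
pose W' := W :\: C.
have sW' : W' \subset U' by apply: subset_trans (subsetDl _ _) sW.
have clW' : closed e' W'.
  by move=> x y exy; rewrite !in_setD (clC _ _ exy) (clW _ _ exy).
have cW'' : #|W'| <= n.
  have : #|W'| <= #|W :\ c|.
    apply: subset_leq_card; apply/subsetP => x; rewrite !inE => /andP [xC ->].
    by rewrite andbT; apply: contraNneq xC => ->.
  move: cW; rewrite (cardsD1 c W) cW' add1n ltnS => h1 h2; exact: leq_trans h2 h1.
have [ts [dts [vts [uts nts]]]] := IH W' cW'' sW' clW'
  (fun w' w'W => roots w' (subsetP (subsetDl W C) _ w'W)).
have H1 : fverts (t :: ts) =i W.
  move=> x; rewrite /fverts /= mem_cat vt -/(fverts ts) vts in_setD.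
  case xC: (x \in C) => /=; last by [].
  by rewrite (subsetP CW).
have H2 : uniq (fverts (t :: ts)).
  rewrite /fverts /= cat_uniq -/(fverts ts) uts andbT (dec_uniq dt) /=.
  apply/hasPn => x; rewrite vts vt in_setD; by case: (x \in C).
have H3 : forall x y, x \in verts t -> y \in fverts ts -> ~~ adj x y.
  move=> x y; rewrite vt vts in_setD => xC /andP [yC yW].
  apply/negP => axy; move: yC; rewrite -(clC x y) ?xC //.
  by rewrite /e' /eU axy (subsetP CU) // (subsetP sW).
by exists (t :: ts); split; [split | split; [|split]].
Qed.

Lemma dec_all d : DEC d.
Proof.
elim: d => [|d IH] U r rU conn bnd.
  by have := bnd [::] erefl erefl.
pose U' := U :\ r.
have Hgood : forall c, c \in U' -> adj r c -> forall p, path (eU U') c p -> uniq (c :: p) -> size p < d.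
  move=> c cU' rc p pth up.
  have cU : c \in U by move: cU'; rewrite in_setD1 => /andP [].
  have : size (c :: p) < d.+1.
    apply: bnd; first by rewrite /= {1}/eU rc rU cU /=; exact: sub_path (eU_sub (subsetDl U [set r])) _ _ pth.
    rewrite cons_uniq up andbT inE negb_or.
    have rp : r \notin p by apply/negP => /(path_in pth); rewrite /U' in_setD1 eqxx.
    by rewrite rp andbT; apply/eqP => E; move: cU'; rewrite -E /U' in_setD1 eqxx.
  by [].
have sW : U' \subset U' by [].
have clW : closed (eU U') U'.
  by move=> x y /andP [/andP [_ ->] ->].
have roots : forall w, w \in U' -> exists c, [/\ c \in U', adj r c & connect (eU U') c w].
  move=> w; rewrite /U' in_setD1 => /andP [wr wU].
  case/connectP: (conn w wU) => p pth wE.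
  case/shortenP: pth wE => p' pth' up' _ wE.
  case: p' pth' up' wE => [|c p''] /=; first by move=> _ _ E; move: wr; rewrite E eqxx.
  move=> /andP [erc pth''] /andP [rn up''] wE.
  move: erc => /andP [/andP [rc _] cU].
  have inU : forall z, z \in c :: p'' -> z \in U'.
    move=> z zin; rewrite /U' in_setD1; apply/andP; split.
      by apply: contraNneq rn => <-.
    move: zin; rewrite inE => /orP [/eqP ->|zp] //; exact: path_in pth'' _ zp.
  exists c; split => //; first exact: inU (mem_head _ _).
  apply/connectP; exists p'' => //; exact: path_restr pth'' inU.
have [ts [dts [vts [uts nts]]]] := forest IH Hgood sW clW roots.
exists (Node r ts); split.
  split => //; split => //; rewrite /= uts andbT vts /U' in_setD1 eqxx //.
move=> x; rewrite /= inE -/(fverts ts) vts /U' in_setD1.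
by case: (eqVneq x r) => [->|] //=.
Qed.
End Dec.


Section Conv.
Variables (S : Type) (K : nat).
Definition LL := (S * {ffun 'I_K -> bool})%type.
Definition bits (g : sgraph S) (A : seq 'I_(nv g)) (v : 'I_(nv g)) : {ffun 'I_K -> bool} :=
  [ffun i : 'I_K => nth false (map (@adj S g v) A) i].
Fixpoint conv (g : sgraph S) (A : seq 'I_(nv g)) (t : tree 'I_(nv g)) : tree LL :=
  let: Node v ts := t in Node (@lab S g v, bits A v) (map (conv (v :: A)) ts).
End Conv.

Section Lift.
Variables (S : Type) (le : S -> S -> Prop) (K : nat) (g1 g2 : sgraph S).
Local Notation V1 := 'I_(nv g1).
Local Notation V2 := 'I_(nv g2).
Local Notation adj1 := (@adj S g1).
Local Notation adj2 := (@adj S g2).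
Local Notation lab1 := (@lab S g1).
Local Notation lab2 := (@lab S g2).
Hypotheses (sym1 : symmetric adj1) (sym2 : symmetric adj2).
Hypotheses (irr1 : irreflexive adj1) (irr2 : irreflexive adj2).

Definition RL (a b : LL S K) := le a.1 b.1 /\ a.2 = b.2.

Definition good_map (X1 : seq V1) (X2 : seq V2) (A1 : seq V1) (A2 : seq V2) (h : V1 -> V2) :=
  [/\ forall x, x \in X1 -> h x \in X2,
     {in X1 &, injective h},
     {in X1 &, forall x y, adj1 x y = adj2 (h x) (h y)},
     forall x, x \in X1 -> le (lab1 x) (lab2 (h x)) &
     forall x i, x \in X1 -> i < size A1 -> adj1 x (nth x A1 i) = adj2 (h x) (nth (h x) A2 i)].

Lemma gm_weaken X1 X2 X2' A1 A2 h : {subset X2 <= X2'} ->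
  good_map X1 X2 A1 A2 h -> good_map X1 X2' A1 A2 h.
Proof. by move=> sub [a b c d e]; split => // x xX; apply: sub; apply: a. Qed.

Lemma gm_nil X2 A1 A2 h : good_map [::] X2 A1 A2 h.
Proof. by split. Qed.

Lemma gm_cat X1a X1b X2a X2b A1 A2 ha hb :
  uniq (X1a ++ X1b) -> uniq (X2a ++ X2b) ->
  (forall x y, x \in X1a -> y \in X1b -> ~~ adj1 x y) ->
  (forall x y, x \in X2a -> y \in X2b -> ~~ adj2 x y) ->
  good_map X1a X2a A1 A2 ha -> good_map X1b X2b A1 A2 hb ->
  good_map (X1a ++ X1b) (X2a ++ X2b) A1 A2 (fun x => if x \in X1a then ha x else hb x).
Proof.
rewrite !cat_uniq => /and3P [_ d1 _] /and3P [_ d2 _] nc1 nc2 [a1 b1 c1 d1' e1] [a2 b2 c2 d2' e2].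
have nb : forall x, x \in X1b -> x \notin X1a.
  by move=> x xb; apply/negP => xa; move/hasPn: d1 => /(_ x xb); rewrite xa.
have nb2 : forall y, y \in X2b -> y \notin X2a.
  by move=> y yb; apply/negP => ya; move/hasPn: d2 => /(_ y yb); rewrite ya.
have cases : forall x, x \in X1a ++ X1b -> (x \in X1a) \/ (x \in X1b /\ x \notin X1a).
  move=> x; rewrite mem_cat => /orP [->|xb]; [by left | by right; split => //; apply: nb].
split.
- move=> x /cases [xa|[xb xa]]; rewrite mem_cat ?xa ?a1 //; by rewrite (negbTE xa) a2 ?orbT.
- move=> x y /cases [xa|[xb xa]] /cases [ya|[yb ya]]; rewrite ?xa ?ya ?(negbTE xa) ?(negbTE ya).
  + exact: b1.
  + move=> E; have := nb2 _ (a2 _ yb); by rewrite -E a1.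
  + move=> E; have := nb2 _ (a2 _ xb); by rewrite E a1.
  + exact: b2.
- move=> x y /cases [xa|[xb xa]] /cases [ya|[yb ya]]; rewrite ?xa ?ya ?(negbTE xa) ?(negbTE ya).
  + exact: c1.
  + by rewrite (negbTE (nc1 _ _ xa yb)) (negbTE (nc2 _ _ (a1 _ xa) (a2 _ yb))).
  + by rewrite sym1 sym2 (negbTE (nc1 _ _ ya xb)) (negbTE (nc2 _ _ (a1 _ ya) (a2 _ xb))).
  + exact: c2.
- move=> x /cases [xa|[xb xa]]; rewrite ?xa ?(negbTE xa); [exact: d1' | exact: d2'].
- move=> x i /cases [xa|[xb xa]]; rewrite ?xa ?(negbTE xa); [exact: e1 | exact: e2].
Qed.

Definition TREE d := forall t1 t2 (A1 : seq V1) (A2 : seq V2),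
  dec d t1 -> dec d t2 -> size A1 + d <= K -> size A2 = size A1 ->
  temb RL d (conv K A1 t1) (conv K A2 t2) ->
  exists h, good_map (verts t1) (verts t2) A1 A2 h.

Lemma list_lift d : TREE d -> forall ts1 ts2 (A1 : seq V1) (A2 : seq V2) (v0 : V2),
  allp (dec d) ts1 -> allp (dec d) ts2 ->
  uniq (fverts ts1) -> uniq (fverts ts2) -> nocross ts1 -> nocross ts2 ->
  size A1 + d <= K -> size A2 = size A1 ->
  emb (temb RL d) (map (conv K A1) ts1) (map (conv K A2) ts2) ->
  exists h, good_map (fverts ts1) (fverts ts2) A1 A2 h.
Proof.
move=> HT ts1 ts2 A1 A2 v0 D1 D2 U1 U2 N1 N2 sA sA2 /emb_map.
elim: ts2 ts1 D1 D2 U1 U2 N1 N2 => [|u us IH] [|t ts] //=.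
- by move=> *; exists (fun _ => v0); exact: gm_nil.
- by move=> *; exists (fun _ => v0); exact: gm_nil.
move=> [Dt Dts] [Du Dus] U1 U2 [N1t N1] [N2u N2].
have U2' : uniq (fverts us) by move: U2; rewrite /fverts /= cat_uniq => /and3P [].
case => [[Ht He]|He].
- have U1' : uniq (fverts ts) by move: U1; rewrite /fverts /= cat_uniq => /and3P [].
  have [ht Hht] := HT t u A1 A2 Dt Du sA sA2 Ht.
  have [hr Hhr] := IH ts Dts Dus U1' U2' N1 N2 He.
  eexists; exact: gm_cat U1 U2 N1t N2u Hht Hhr.
- have [h Hh] := IH (t :: ts) (conj Dt Dts) Dus U1 U2' (conj N1t N1) N2 He.
  exists h; apply: gm_weaken Hh => x; rewrite /fverts /= mem_cat => ->; by rewrite orbT.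
Qed.

Lemma tree_lift d : TREE d.
Proof.
elim: d => [|d IH] [r1 ts1] [r2 ts2] A1 A2 //=.
move=> [D1 [U1 N1]] [D2 [U2 N2]] sA sA2 [[Hle Hb] He].
have sA' : size (r1 :: A1) + d <= K by rewrite /= addSnnS.
have sA2' : size (r2 :: A2) = size (r1 :: A1) by rewrite /= sA2.
move: U1 U2 => /andP [r1n U1] /andP [r2n U2].
change (exists h : V1 -> V2, good_map (r1 :: fverts ts1) (r2 :: fverts ts2) A1 A2 h).
have [h [a b c dd e]] := list_lift IH r2 D1 D2 U1 U2 N1 N2 sA' sA2' He.
exists (fun x => if x == r1 then r2 else h x).
have nr : forall x, x \in fverts ts1 -> (x == r1) = false.
  by move=> x xin; apply/negbTE; apply: contraNneq r1n => <-.
have hr : forall x, x \in fverts ts1 -> (h x == r2) = false.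
  by move=> x xin; apply/negbTE; apply: contraNneq r2n => <-; apply: a.
have adjr : forall y, y \in fverts ts1 -> adj1 y r1 = adj2 (h y) r2.
  by move=> y yin; have := e y 0 yin erefl.
have cases : forall x, x \in r1 :: fverts ts1 -> x = r1 \/ (x \in fverts ts1).
  by move=> x; rewrite inE => /orP [/eqP ->|]; [left | right].
split.
- move=> x /cases [->|xin]; first by rewrite eqxx mem_head.
  by rewrite nr // inE a ?orbT.
- move=> x y /cases [->|xin] /cases [->|yin] //; rewrite ?eqxx ?nr //.
  + by move=> E; have := hr _ yin; rewrite -E eqxx.
  + by move=> E; have := hr _ xin; rewrite E eqxx.
  + exact: b.
- move=> x y /cases [->|xin] /cases [->|yin]; rewrite ?eqxx ?nr //.
  + by rewrite irr1 irr2.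
  + by rewrite sym1 sym2 adjr.
  + by rewrite adjr.
  + exact: c.
- move=> x /cases [->|xin]; first by rewrite eqxx.
  rewrite nr //; exact: dd.
- move=> x i /cases [->|xin] iA.
    rewrite eqxx.
    have iK : i < K by apply: (leq_trans iA); apply: leq_trans sA; exact: leq_addr.
    have Hb' : bits K A1 r1 = bits K A2 r2 := Hb.
    have := congr1 (fun f : {ffun 'I_K -> bool} => f (Ordinal iK)) Hb'; rewrite /bits !ffunE /=.
    by rewrite (nth_map r1) // (nth_map r2) ?sA2.
  by rewrite nr //; have := e x i.+1 xin iA.
Qed.
End Lift.


Lemma graph_forest (S : Type) (g : sgraph S) k : undirected g -> path_bounded k g ->
  exists ts : seq (tree 'I_(nv g)), allp (dec k.+1) ts /\ (forall x, x \in fverts ts) /\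
    uniq (fverts ts) /\ nocross ts.
Proof.
move=> [sym _] pb.
have := @forest S g sym k.+1 (dec_all sym (d:=k.+1)) setT (fun _ => True) _ setT (subxx _).
case.
- move=> c _ _ p pth up; rewrite ltnS; apply: (pb c p) => //.
  apply: sub_path pth => x y /andP [/andP [a _] _]; exact: a.
- by move=> x y _; rewrite !inE.
- by move=> w _; exists w; split; rewrite ?inE ?connect0.
move=> ts [D [V [U N]]]; exists ts; split => //; split => // x; by rewrite V inE.
Qed.

Lemma dec_tin (S : Type) K (g : sgraph S) d (t : tree 'I_(nv g)) A :
  dec d t -> tin (fun _ : LL S K => True) d (conv K A t).
Proof.
elim: d t A => [|d IH] [v ts] A //= [D _]; split => //.
elim: ts D => //= t ts IH2 [Dt Dts]; split; [exact: IH | exact: IH2].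
Qed.

Lemma allp_map (A B : Type) (P : B -> Prop) (f : A -> B) (Q : A -> Prop) s :
  (forall x, Q x -> P (f x)) -> allp Q s -> allp P (map f s).
Proof. by move=> H; elim: s => //= x s IH [Qx Qs]; split; auto. Qed.

Unset Implicit Arguments.
Theorem lemma15 (S : Type) (le : S -> S -> Prop) (k : nat) :
  wqo le -> wqo_on (@kpb_sgraph S k) (sg_le le).
Proof.
move=> Hle; have [Hr [Ht _]] := Hle.
split.
  move=> g _; exists id; split => //; split => // u; exact: Hr.
split.
  move=> g1 g2 g3 _ _ _ [h1 [i1 [a1 l1]]] [h2 [i2 [a2 l2]]].
  exists (h2 \o h1); split; first exact: inj_comp.
  split; first by move=> u v; rewrite a1 a2.
  move=> u; exact: (Ht _ (lab (h1 u)) _ I I I (l1 u) (l2 _)).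
move=> f Pf.
pose K := k.+1.
pose Q i (ts : seq (tree 'I_(nv (f i)))) := allp (dec k.+1) ts /\ (forall x, x \in fverts ts) /\
    uniq (fverts ts) /\ nocross ts.
pose F i := epsilon (inhabits [::]) (Q i).
have FQ : forall i, Q i (F i).
  move=> i; apply: epsilon_spec; case: (Pf i) => u pb; exact: graph_forest u pb.
pose G i := map (conv K [::]) (F i).
have Wl := prod_wqo {ffun 'I_K -> bool} Hle.
have Wt := higman (tree_wqo k.+1 Wl).
case: Wt => _ [_ Wb].
have PG : forall i, allp (tin (fun _ => True) k.+1) (G i).
  move=> i; apply: allp_map (FQ i).1 => t; exact: dec_tin.
have [i [j [ij E]]] := Wb G PG.
exists i, j; split => //.
have [[sym1 irr1] _] := Pf i; have [[sym2 irr2] _] := Pf j.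
have [D1 [C1 [U1 N1]]] := FQ i; have [D2 [C2 [U2 N2]]] := FQ j.
case: (posnP (nv (f i))) => [n0|npos].
  have hh : 'I_(nv (f i)) -> 'I_(nv (f j)) by move=> u; exfalso; case: u => m hm; move: hm; rewrite n0.
  exists hh; split; first by move=> u; exfalso; case: u => m hm; move: hm; rewrite n0.
  by split=> u; exfalso; case: u => m hm; move: hm; rewrite n0.
have x0 := C1 (Ordinal npos).
have [v0 _] : exists v0 : 'I_(nv (f j)), True.
  move: E x0; rewrite /G; case: (F j) => [|u us]; last by case: u => v _ _ _; exists v.
  by case: (F i) => [|t ts].
have [h [a b c d e]] := list_lift (A1:=[::]) (A2:=[::]) sym1 sym2 (tree_lift sym1 sym2 irr1 irr2 (d:=k.+1)) v0 D1 D2 U1 U2 N1 N2 (leqnn _) erefl E.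
exists h; split; first by move=> u v; apply: b; apply: C1.
split; first by move=> u v; apply: c; apply: C1.
move=> u; apply: d; exact: C1.
Qed.
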